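(* Let $G$ be the cdf of a continuous real random variable. For $(\lambda_1,\lambda_2)\in\mathbb{R}^2$ define $$F_{R18a}(x)=(1+\lambda_1)G(x)+(\lambda_2-\lambda_1)G^2(x)-\lambda_2G^3(x),\qquad F_G(x)=\lambda_1 G(x)+(\lambda_2-\lambda_1)G^2(x)+(1-\lambda_2)G^3(x).$$ Let $\mathscr{S}_{R18a}=\{(\lambda_1,\lambda_2): -1\le\lambda_1\le1,\ -1\le\lambda_2\le1,\ -2\le\lambda_1+\lambda_2\le1\}$, $\mathscr{S}_{MR18a}=\{(\lambda_1,\lambda_2): -1\le\lambda_1\le2,\ -1\le\lambda_2\le2,\ -2\le\lambda_1+\lambda_2\le1\}$ and $\mathscr{S}_{MG}=\{(\lambda_1,\lambda_2):0\le\lambda_1\le3,\ 0\le\lambda_2\le3,\ 0\le\lambda_1+\lambda_2\le3\}$. Then: (i) For every $(\lambda_1,\lambda_2)\in\mathscr{S}_{R18a}$, $F_{R18a}$ is a cdf. (ii) For every $(\lambda_1,\lambda_2)\in\mathscr{S}_{MR18a}$, $F_{R18a}$ is a cdf. (iii) For every $(\lambda_1,\lambda_2)\in\mathscr{S}_{MR18a}$, $(\lambda_1+1,\lambda_2+1)\in\mathscr{S}_{MG}$ and $F_{R18a}$ with parameters $(\lambda_1,\lambda_2)$ coincides with $F_G$ with parameters $(\lambda_1+1,\lambda_2+1)$. (iv) For every $(\lambda_1,\lambda_2)\in\mathscr{S}_{MG}$, $(\lambda_1-1,\lambda_2-1)\in\mathscr{S}_{MR18a}$ and $F_G$ with parameters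 $(\lambda_1,\lambda_2)$ coincides with $F_{R18a}$ with parameters $(\lambda_1-1,\lambda_2-1)$.
   Context: A cdf is a nondecreasing, right-continuous function $F:\mathbb{R}\to[0,1]$ with limits $0$ at $-\infty$ and $1$ at $+\infty$. $G^k(x)=(G(x))^k$. *)

(* Defs.v *)
From Stdlib Require Import Reals.
From Coquelicot Require Import Coquelicot.
Open Scope R_scope.

Definition is_cdf (F : R -> R) : Prop :=
  (forall x, 0 <= F x <= 1) /\
  (forall x y, x <= y -> F x <= F y) /\
  (forall x, filterlim F (at_right x) (locally (F x))) /\
  is_lim F m_infty 0 /\
  is_lim F p_infty 1.

Definition F_R18a (l1 l2 : R) (G : R -> R) (x : R) : R :=
  (1 + l1) * G x + (l2 - l1) * (G x) ^ 2 - l2 * (G x) ^ 3.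

Definition F_G (l1 l2 : R) (G : R -> R) (x : R) : R :=
  l1 * G x + (l2 - l1) * (G x) ^ 2 + (1 - l2) * (G x) ^ 3.

Definition S_R18a (l1 l2 : R) : Prop :=
  -1 <= l1 <= 1 /\ -1 <= l2 <= 1 /\ -2 <= l1 + l2 <= 1.

Definition S_MR18a (l1 l2 : R) : Prop :=
  -1 <= l1 <= 2 /\ -1 <= l2 <= 2 /\ -2 <= l1 + l2 <= 1.

Definition S_MG (l1 l2 : R) : Prop :=
  0 <= l1 <= 3 /\ 0 <= l2 <= 3 /\ 0 <= l1 + l2 <= 3.

(* Main.v *)
Require Import Defs.
From Stdlib Require Import Reals Lra Psatz.
From Coquelicot Require Import Coquelicot.
Open Scope R_scope.

Lemma cdf_comp (G h : R -> R) (hG : is_cdf G) (hGc : forall x, continuous G x) :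
  (forall u, continuous h u) -> h 0 = 0 -> h 1 = 1 ->
  (forall u v, 0 <= u -> u <= v -> v <= 1 -> h u <= h v) ->
  is_cdf (fun x => h (G x)).
Proof.
  intros hc h0 h1 hm.
  destruct hG as [B [M [RC [L0 L1]]]].
  assert (Hc : forall x, continuous (fun x => h (G x)) x).
  { intro x. apply continuous_comp; auto. }
  split; [|split; [|split; [|split]]].
  - intro x. destruct (B x). split.
    + rewrite <- h0. apply hm; lra.
    + rewrite <- h1. apply hm; lra.
  - intros x y Hxy. destruct (B x), (B y). apply hm; auto.
  - intro x. eapply filterlim_filter_le_1; [|apply Hc].
    intros P HP. apply filter_le_within. exact HP.
  - unfold is_lim. replace (Finite 0) with (Finite (h 0)) by (rewrite h0; auto).
    eapply filterlim_comp; [exact L0|apply hc].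
  - unfold is_lim. replace (Finite 1) with (Finite (h 1)) by (rewrite h1; auto).
    eapply filterlim_comp; [exact L1|apply hc].
Qed.

Lemma poly_mono (a b : R) : 0 <= a -> 0 <= b -> a + b <= 3 ->
  forall u v, 0 <= u -> u <= v -> v <= 1 ->
  a * u + (b - a) * u ^ 2 + (1 - b) * u ^ 3 <= a * v + (b - a) * v ^ 2 + (1 - b) * v ^ 3.
Proof.
  intros Ha Hb Hab.
  set (hp := fun w => a * (1 - w) ^ 2 + 2 * b * w * (1 - w) + (3 - a - b) * w ^ 2).
  assert (Hp : forall w, 0 <= w <= 1 -> 0 <= hp w).
  { intros w Hw. unfold hp.
    assert (0 <= a * (1 - w) ^ 2) by (apply Rmult_le_pos; [lra|nra]).
    assert (0 <= 2 * b * w * (1 - w)) by (apply Rmult_le_pos; [apply Rmult_le_pos|]; nra).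
    assert (0 <= (3 - a - b) * w ^ 2) by (apply Rmult_le_pos; [lra|nra]).
    lra. }
  intros u v Hu Huv Hv.
  assert (E : a * v + (b - a) * v ^ 2 + (1 - b) * v ^ 3 - (a * u + (b - a) * u ^ 2 + (1 - b) * u ^ 3)
     = (v - u) * ((hp u + 4 * hp ((u + v) / 2) + hp v) / 6)).
  { unfold hp. field. }
  assert (0 <= (v - u) * ((hp u + 4 * hp ((u + v) / 2) + hp v) / 6)).
  { apply Rmult_le_pos; [lra|].
    assert (0 <= hp u) by (apply Hp; lra).
    assert (0 <= hp v) by (apply Hp; lra).
    assert (0 <= hp ((u + v) / 2)) by (apply Hp; lra).
    lra. }
  lra.
Qed.

Lemma R18a_cdf (G : R -> R) (hG : is_cdf G) (hGc : forall x, continuous G x) l1 l2 :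
  S_MR18a l1 l2 -> is_cdf (F_R18a l1 l2 G).
Proof.
  unfold S_MR18a; intros [[H1 H2] [[H3 H4] [H5 H6]]].
  unfold F_R18a.
  apply (cdf_comp G (fun u => (1 + l1) * u + (l2 - l1) * u ^ 2 - l2 * u ^ 3) hG hGc).
  - intro u. apply (@ex_derive_continuous R_AbsRing R_NormedModule). auto_derive. auto.
  - ring.
  - ring.
  - intros u v Hu Huv Hv.
    pose proof (poly_mono (1 + l1) (1 + l2) ltac:(lra) ltac:(lra) ltac:(lra) u v Hu Huv Hv).
    replace ((1 + l2) - (1 + l1)) with (l2 - l1) in H by ring.
    replace (1 - (1 + l2)) with (- l2) in H by ring.
    lra.
Qed.

Theorem proposition3 (G : R -> R) (hG : is_cdf G) (hGc : forall x, continuous G x) :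
  (forall l1 l2, S_R18a l1 l2 -> is_cdf (F_R18a l1 l2 G)) /\
  (forall l1 l2, S_MR18a l1 l2 -> is_cdf (F_R18a l1 l2 G)) /\
  (forall l1 l2, S_MR18a l1 l2 ->
     S_MG (l1 + 1) (l2 + 1) /\
     (forall x, F_R18a l1 l2 G x = F_G (l1 + 1) (l2 + 1) G x)) /\
  (forall l1 l2, S_MG l1 l2 ->
     S_MR18a (l1 - 1) (l2 - 1) /\
     (forall x, F_G l1 l2 G x = F_R18a (l1 - 1) (l2 - 1) G x)).
Proof.
  split; [|split; [|split]].
  - intros l1 l2 H. apply R18a_cdf; auto. unfold S_R18a, S_MR18a in *. lra.
  - intros l1 l2 H. apply R18a_cdf; auto.
  - intros l1 l2 H. unfold S_MR18a, S_MG in *. split; [lra|].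
    intro x. unfold F_R18a, F_G. ring.
  - intros l1 l2 H. unfold S_MR18a, S_MG in *. split; [lra|].
    intro x. unfold F_R18a, F_G. ring.
Qed.
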